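(* Let $D,\chi,\varepsilon>0$, $a\ge0$, $\beta\ge 0$, $b=D\beta^2$, and let $0<r_0<r_1$. Suppose $\rho\in C^0[0,\infty)$, $\phi\in C^2[0,\infty)$ satisfy $\rho(0)=0$, $\phi(0)\ge 0$, $\rho>0$ on $(r_0,r_1)$, $\rho\equiv0$ on $[0,r_0]\cup[r_1,\infty)$, $D\phi_{rr}+D\frac{\phi_r}{r}+a\rho-b\phi=0$ on $(0,\infty)$, and on $(r_0,r_1)$ the relation $\varepsilon\rho=\chi\phi+K$ holds for a constant $K$. If $K=0$ and $\phi_r(r_0)=\phi_r(r_1)=0$, then no such solution exists (i.e. there is no nontrivial solution of this form).
   Context: The relation $\varepsilon\rho=\chi\phi+K$ on the positivity region is the integrated form of the equation $\partial_r(\frac{\varepsilon}{2}\rho^2)=\chi\rho\phi_r$ from the radially symmetric stationary form of a hyperbolic-parabolic chemotaxis model on $\mathbb{R}^2$ with pressure $p(\rho)=\frac{\varepsilon}{2}\rho^2$. *)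

(* Defs.v *)
From Stdlib Require Import Reals.
From Coquelicot Require Import Coquelicot.
Open Scope R_scope.

Definition nonneg (x : R) : Prop := 0 <= x.

Definition continuous_on_nonneg (f : R -> R) : Prop :=
  forall r, 0 <= r -> filterlim f (within nonneg (locally r)) (locally (f r)).

Definition has_derive_on_nonneg (f f' : R -> R) : Prop :=
  forall r, 0 <= r ->
    filterlim (fun x => (f x - f r) / (x - r))
      (within (fun x => 0 <= x /\ x <> r) (locally r)) (locally (f' r)).

Definition C2_nonneg_with (phi phi1 phi2 : R -> R) : Prop :=
  has_derive_on_nonneg phi phi1 /\ has_derive_on_nonneg phi1 phi2 /\
  continuous_on_nonneg phi2.

(* Main.v *)
Require Import Defs.
From Stdlib Require Import Reals Lra.
From Coquelicot Require Import Coquelicot.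
Open Scope R_scope.
Lemma lim_within_R (f : R -> R) (P : R -> Prop) r l :
  filterlim f (within P (locally r)) (locally l) ->
  forall e, 0 < e -> exists d, 0 < d /\ forall y, Rabs (y - r) < d -> P y -> Rabs (f y - l) < e.
Proof.
  intros H e He.
  destruct (H (ball l (mkposreal e He)) (locally_ball l (mkposreal e He))) as [d Hd].
  exists d. split. apply cond_pos. intros y Hy Py.
  exact (Hd y Hy Py).
Qed.

Lemma deriv_pos f f' : has_derive_on_nonneg f f' -> forall r, 0 < r -> derivable_pt_lim f r (f' r).
Proof.
  intros H r Hr e He.
  destruct (lim_within_R _ _ _ _ (H r (Rlt_le _ _ Hr)) e He) as [d [Hd Hq]].
  assert (Hm : 0 < Rmin d r) by (apply Rmin_pos; lra).
  exists (mkposreal _ Hm). intros h Hh0 Hh. simpl in Hh.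
  specialize (Hq (r+h)). replace (r+h-r) with h in Hq by ring.
  assert (H1 := Rmin_l d r). assert (H2 := Rmin_r d r).
  destruct (Rabs_def2 h (Rmin d r) Hh).
  apply Hq. lra. split. lra. lra.
Qed.

Theorem proposition7p1 (D chi eps a beta b r0 r1 K : R)
    (rho phi phi_r phi_rr : R -> R) :
  0 < D -> 0 < chi -> 0 < eps -> 0 <= a -> 0 <= beta ->
  b = D * beta ^ 2 ->
  0 < r0 -> r0 < r1 ->
  continuous_on_nonneg rho ->
  C2_nonneg_with phi phi_r phi_rr ->
  rho 0 = 0 ->
  0 <= phi 0 ->
  (forall r, r0 < r < r1 -> 0 < rho r) ->
  (forall r, (0 <= r <= r0) \/ r1 <= r -> rho r = 0) ->
  (forall r, 0 < r ->
     D * phi_rr r + D * (phi_r r / r) + a * rho r - b * phi r = 0) ->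
  (forall r, r0 < r < r1 -> eps * rho r = chi * phi r + K) ->
  K = 0 ->
  phi_r r0 = 0 -> phi_r r1 = 0 ->
  False.
Proof.
  intros HD Hchi Heps Ha Hbeta Hb Hr0 Hr01 Hrho [Hphi [Hphi1 _]] _ _ Hpos Hzero Hode Hrel HK Hd0 Hd1.
  subst K.
  set (w := fun x => x * phi_r x).
  assert (Hw : forall c, 0 < c -> derivable_pt_lim w c (phi_r c + c * phi_rr c)).
  { intros c Hc. unfold w.
    assert (H := derivable_pt_lim_mult id phi_r c 1 (phi_rr c) (derivable_pt_lim_id c) (deriv_pos _ _ Hphi1 c Hc)).
    unfold mult_fct, id in H. replace (phi_r c + c * phi_rr c) with (1 * phi_r c + c * phi_rr c) by ring.
    exact H. }
  assert (Hw' : forall c, 0 < c -> phi_r c + c * phi_rr c = c * (b * phi c - a * rho c) / D).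
  { intros c Hc. specialize (Hode c Hc).
    replace (phi_r c + c * phi_rr c) with (c * (D * phi_rr c + D * (phi_r c / c)) / D) by (field; lra).
    replace (D * phi_rr c + D * (phi_r c / c)) with (b * phi c - a * rho c) by lra.
    reflexivity. }
  destruct (MVT_cor2 w (fun c => phi_r c + c * phi_rr c) r0 r1 Hr01) as [c [Hc Hcr]].
  { intros c Hc. apply Hw. lra. }
  unfold w in Hc. rewrite Hd0, Hd1 in Hc.
  assert (Hphic : phi c = eps / chi * rho c).
  { specialize (Hrel c Hcr). field_simplify_eq; lra. }
  assert (Hrc := Hpos c Hcr).
  assert (Hlam : b * eps / chi - a = 0).
  { rewrite Hw' in Hc by lra. rewrite Hphic in Hc.
    assert (c * (b * (eps / chi * rho c) - a * rho c) / D = 0).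
    { assert (r1 - r0 <> 0) by lra. assert (Hc2 : c * (b * (eps / chi * rho c) - a * rho c) / D * (r1 - r0) = 0) by lra.
      apply Rmult_integral in Hc2. destruct Hc2; [auto|lra]. }
    assert (c * rho c * (b * eps / chi - a) = 0).
    { replace (c * rho c * (b * eps / chi - a)) with (D * (c * (b * (eps / chi * rho c) - a * rho c) / D)) by (field; lra).
      rewrite H; ring. }
    apply Rmult_integral in H0. destruct H0; auto.
    apply Rmult_integral in H0. lra. }
  assert (Hw0 : forall x, r0 < x < r1 -> phi_r x + x * phi_rr x = 0).
  { intros x Hx. rewrite Hw' by lra.
    assert (phi x = eps / chi * rho x) by (specialize (Hrel x Hx); field_simplify_eq; lra).
    rewrite H.
    replace (x * (b * (eps / chi * rho x) - a * rho x) / D) with (x * rho x * (b * eps / chi - a) / D) by (field; lra).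
    rewrite Hlam. field. lra. }
  assert (Hpr : forall m, r0 < m < r1 -> phi_r m = 0).
  { intros m Hm.
    destruct (MVT_cor2 w (fun c => phi_r c + c * phi_rr c) r0 m (proj1 Hm)) as [c' [Hc' Hcr']].
    { intros x Hx. apply Hw. lra. }
    unfold w in Hc'. rewrite Hd0, Hw0 in Hc' by lra.
    assert (m * phi_r m = 0) by lra.
    apply Rmult_integral in H. lra. }
  assert (Hconst : forall m, r0 < m < r1 -> phi m = phi r0).
  { intros m Hm.
    destruct (MVT_cor2 phi phi_r r0 m (proj1 Hm)) as [c' [Hc' Hcr']].
    { intros x Hx. apply deriv_pos; auto. lra. }
    rewrite Hpr in Hc' by lra. lra. }
  (* rho constant on (r0,r1), rho r0 = 0, continuity *)
  set (C := rho c).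
  assert (HC : forall m, r0 < m < r1 -> rho m = C).
  { intros m Hm. unfold C.
    assert (eps * rho m = eps * rho c).
    { rewrite !Hrel by lra. rewrite Hconst by lra. rewrite (Hconst c) by lra. ring. }
    apply Rmult_eq_reg_l in H; lra. }
  assert (Hz : rho r0 = 0) by (apply Hzero; left; lra).
  destruct (lim_within_R _ _ _ _ (Hrho r0 (Rlt_le _ _ Hr0)) C Hrc) as [d [Hdpos Hdd]].
  assert (H1 := Rmin_l d (r1 - r0)). assert (H2 := Rmin_r d (r1 - r0)).
  assert (Hm : 0 < Rmin d (r1 - r0)) by (apply Rmin_pos; lra).
  revert H1 H2 Hm Hdd. generalize (Rmin d (r1 - r0)). intros q H1 H2 Hm Hdd.
  specialize (Hdd (r0 + q / 2)).
  rewrite Hz, HC in Hdd by lra.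
  assert (Rabs (C - 0) < C).
  { apply Hdd. rewrite Rabs_right. lra. apply Rle_ge. clear -Hm. lra. unfold Defs.nonneg. clear -Hm Hr0. lra. }
  rewrite Rminus_0_r, Rabs_right in H. lra. apply Rle_ge. unfold C. apply Rlt_le. exact Hrc.
Qed.
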